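(* For each $n\ge0$, the map $\psi:\mathcal{D}_n\to\mathfrak{S}_n(321)$ is a bijection satisfying $(\mathrm{hill}(D),\mathrm{seg}(D),\mathrm{lseg}(D))=(\mathrm{fix}(\psi(D)),\mathrm{des}(\psi(D)),\mathrm{ldes}(\psi(D))+1)$ for every $D\in\mathcal{D}_n$.
   Context: A Dyck path of semilength $n$ is a lattice path from $(0,0)$ to $(n,n)$ with east steps $(1,0)$ and north steps $(0,1)$ never passing above the line $y=x$; it is encoded as $D=d_1d_2\cdots d_n$ where $d_i$ is the number of north steps before the $i$-th east step. $\mathcal{D}_n$ is the set of Dyck paths of semilength $n$. Statistics: $\mathrm{hill}(D)$ is the number of east steps that touch the diagonal $y=x$ and are immediately followed by a north step; a segment is a maximal string of at least two consecutive east steps of the same height, and $\mathrm{seg}(D)$ is the number of segments; $\mathrm{lseg}(D)=i$ if the $i$-th east step is the last step of the leftmost segment of $D$, while $\mathrm{lseg}(D)=n+1$ if $D$ has no segment (i.e. $D=01\cdots(n-1)$; in particular the empty path has $\mathrm{lseg}=1$). $\mathfrak{S}_n(321)$ is the set of permutations of $[n]$ with no $i<j<l$ and $\pi_i>\pi_j>\pi_l$. For $\pi\in\mathfrak{S}_n$: $\mathrm{fix}(\pi)=|\{i:\pi_i=i\}|$, $\mathrm{des}(\pi)=|\{i:\pi_i>\pi_{i+1}\}|$, $\mathrm{ldes}(\pi)=\min\{i:\pi_i>\pi_{i+1}\text{ or }i=n\}$ (with $\mathrm{ldes}=0$ for the empty permutation). The map $\psi$ (Krattenthaler's bijection): for $D=d_1\cdots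 d_n$, $\psi(D)=\pi_1\cdots\pi_n$ where $\pi_i=d_i+1$ if $i=n$ or $d_i\ne d_{i+1}$; otherwise, if $i$ is the $j$-th smallest element of $\{l\in[n-1]:d_l=d_{l+1}\}$, then $\pi_i$ is the $j$-th smallest element of $[n]\setminus\{d_1+1,\dots,d_n+1\}$. *)

(* Defs.v *)
(* Sequences are 0-indexed in Rocq; the paper's 1-indexed
   d_i / pi_i is nth 0 s (i-1). *)
From mathcomp Require Import all_boot.
Set Implicit Arguments. Unset Strict Implicit. Unset Printing Implicit Defensive.

(* D = d_1 ... d_n is a Dyck path of semilength n: lattice path (0,0)->(n,n),
   east/north steps, never above y=x.  In terms of d: d weakly increasing and
   d_i <= i-1 (1-indexed). *)
Definition is_dyck (n : nat) (d : seq nat) : bool :=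
  (size d == n) && sorted leq d && all (fun i => nth 0 d i <= i) (iota 0 n).

(* hill: east step i (1-indexed) starts at (i-1, d_i); it touches y=x iff
   d_i = i-1, and it is immediately followed by a north step iff i = n
   (the path must still climb to (n,n)) or d_{i+1} > d_i. *)
Definition hill (d : seq nat) : nat :=
  let n := size d in
  count (fun i => (nth 0 d i == i) &&
                  ((i.+1 == n) || (nth 0 d i < nth 0 d i.+1))) (iota 0 n).

(* seg: number of maximal runs of >= 2 equal consecutive entries; counted by
   their starting positions. *)
Definition seg (d : seq nat) : nat :=
  let n := size d in
  count (fun i => (nth 0 d i == nth 0 d i.+1) &&
                  ((i == 0) || (nth 0 d i.-1 != nth 0 d i))) (iota 0 n.-1).

(* lseg: 1-indexed position of the last east step of the leftmost segment,
   or n+1 if there is no segment. *)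
Definition lseg (d : seq nat) : nat :=
  let n := size d in
  let a := find (fun i => nth 0 d i == nth 0 d i.+1) (iota 0 n.-1) in
  if a == n.-1 then n.+1
  else (find (fun j => (a <= j) && ((j.+1 == n) || (nth 0 d j != nth 0 d j.+1)))
             (iota 0 n)).+1.

(* Permutations of [n] written in one-line notation as sequences of values in
   1..n. *)
Definition is_perm (n : nat) (p : seq nat) : bool := perm_eq p (iota 1 n).

Definition avoids321 (p : seq nat) : Prop :=
  ~ exists i j l, [/\ i < j, j < l, l < size p,
                     nth 0 p i > nth 0 p j & nth 0 p j > nth 0 p l].

Definition is_perm321 (n : nat) (p : seq nat) : Prop := is_perm n p /\ avoids321 p.

Definition fixp (p : seq nat) : nat :=
  count (fun i => nth 0 p i == i.+1) (iota 0 (size p)).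

Definition des (p : seq nat) : nat :=
  count (fun i => nth 0 p i > nth 0 p i.+1) (iota 0 (size p).-1).

Definition ldes (p : seq nat) : nat :=
  let n := size p in
  if n == 0 then 0
  else (find (fun i => (i.+1 == n) || (nth 0 p i > nth 0 p i.+1)) (iota 0 n)).+1.

Definition psi (d : seq nat) : seq nat :=
  let n := size d in
  let comp := [seq k <- iota 1 n | k \notin [seq x.+1 | x <- d]] in
  mkseq (fun i =>
    if (i.+1 == n) || (nth 0 d i != nth 0 d i.+1) then (nth 0 d i).+1
    else nth 0 comp (count (fun l => nth 0 d l == nth 0 d l.+1) (iota 0 i))) n.

(* Main.v *)
Require Import Defs.
From mathcomp Require Import all_boot zify.
Set Implicit Arguments. Unset Strict Implicit. Unset Printing Implicit Defensive.

Lemma find_iota_char (P : pred nat) m k : k <= m ->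
  (forall i, i < k -> ~~ P i) -> (k < m -> P k) -> find P (iota 0 m) = k.
Proof.
elim: m k P => [|m IH] k P hk hlt hP.
  by move: hk; rewrite leqn0 => /eqP ->.
have E : iota 1 m = [seq i.+1 | i <- iota 0 m] by exact: (iotaDl 1 0 m).
rewrite /= E find_map.
case: k hk hlt hP => [|k] hk hlt hP.
  by rewrite hP.
have -> : P 0 = false by apply/negbTE/hlt.
congr S; apply: IH; [done | by move=> i hi; apply: hlt | by move=> h; apply: hP].
Qed.

Lemma find_iota_spec (P : pred nat) m :
  [/\ find P (iota 0 m) <= m,
      (forall i, i < find P (iota 0 m) -> ~~ P i) &
      (find P (iota 0 m) < m -> P (find P (iota 0 m)))].
Proof.
split.
- by have := find_size P (iota 0 m); rewrite size_iota.
- move=> i hi. have hm : i < m.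
    by apply: leq_trans hi _; have := find_size P (iota 0 m); rewrite size_iota.
  by have := before_find 0 hi; rewrite nth_iota // add0n => ->.
- move=> h. have : has P (iota 0 m) by rewrite has_find size_iota.
  by move/(nth_find 0); rewrite nth_iota.
Qed.

Lemma count_iota_split (P : pred nat) i j : i <= j ->
  count P (iota 0 j) = count P (iota 0 i) + count P (iota i (j - i)).
Proof. by move=> h; rewrite -{1}(subnKC h) iotaD count_cat. Qed.

Lemma count_iota_lt (P : pred nat) i j : i < j -> P i ->
  count P (iota 0 i) < count P (iota 0 j).
Proof.
move=> h hP; rewrite (count_iota_split P (ltnW h)).
have -> : j - i = (j - i.+1).+1 by lia.
by rewrite /= hP; lia.
Qed.

Lemma count_iota_S (P : pred nat) i :
  count P (iota 0 i.+1) = count P (iota 0 i) + P i.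
Proof. by rewrite -addn1 iotaD count_cat /= addn0 add0n. Qed.

Lemma nth_filter_iota (f : nat -> nat) (P : pred nat) n i : i < n -> P i ->
  nth 0 [seq f l | l <- filter P (iota 0 n)] (count P (iota 0 i)) = f i.
Proof.
move=> hi hP.
have -> : n = i + (n - i) by lia.
rewrite iotaD filter_cat map_cat nth_cat size_map size_filter ltnn subnn add0n.
rewrite ?subn0; have -> : n - i = (n - i).-1.+1 by lia.
by rewrite /= hP.
Qed.

Lemma starts_ends (b : nat -> bool) m : b m = false ->
  count (fun i => b i && ((i == 0) || ~~ b i.-1)) (iota 0 m) =
  count (fun i => b i && ~~ b i.+1) (iota 0 m).
Proof.
suff H : forall m, count (fun i => b i && ((i == 0) || ~~ b i.-1)) (iota 0 m) =
  count (fun i => b i && ~~ b i.+1) (iota 0 m) + [&& 0 < m, b m.-1 & b m].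
  by move=> hm; rewrite H hm !andbF addn0.
elim=> [|k IH]; first by [].
rewrite !count_iota_S IH; clear IH.
move: (count _ (iota 0 k)) => c.
case: k => [|k] /=; first by case: (b 0); case: (b 1) => /=; lia.
by case: (b k); case: (b k.+1); case: (b k.+2) => /=; lia.
Qed.

Lemma pw_map_incr (f : nat -> nat) s : pairwise ltn s ->
  {in s &, forall a b, a < b -> f a < f b} -> pairwise ltn (map f s).
Proof.
elim: s => [|x s IH] //= /andP[hx hs] hf.
apply/andP; split.
  rewrite all_map; apply/allP => y hy /=; apply: hf;
    [by rewrite inE eqxx| by rewrite inE hy orbT| by move/allP: hx; apply].
apply: IH => // a c ha hc; apply: hf; by rewrite inE ?ha ?hc orbT.
Qed.

Definition bB (d : seq nat) i := (i.+1 < size d) && (nth 0 d i == nth 0 d i.+1).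
Definition compl (d : seq nat) : seq nat :=
  [seq k <- iota 1 (size d) | k \notin [seq x.+1 | x <- d]].
Definition rk (d : seq nat) i := count (fun l => nth 0 d l == nth 0 d l.+1) (iota 0 i).

Lemma rkE d i : i < size d -> rk d i = count (bB d) (iota 0 i).
Proof.
move=> hi; apply: eq_in_count => l; rewrite mem_iota /bB => /andP[_ hl].
by rewrite (_ : l.+1 < size d) //; lia.
Qed.

Lemma psi_nth d i : i < size d ->
  nth 0 (psi d) i = if bB d i then nth 0 (compl d) (rk d i) else (nth 0 d i).+1.
Proof.
move=> hi; rewrite /psi nth_mkseq // /bB.
case: (ltngtP i.+1 (size d)) => h; try lia.
- by rewrite /=; case: eqP.
- done.
Qed.

Lemma size_psi d : size (psi d) = size d.
Proof. by rewrite size_mkseq. Qed.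

Lemma compl_sorted d : sorted ltn (compl d).
Proof. exact: sorted_filter ltn_trans _ _ (iota_ltn_sorted 1 _). Qed.

Lemma compl_uniq d : uniq (compl d).
Proof. by rewrite filter_uniq // iota_uniq. Qed.

Lemma compl_lt d a b : a < b -> b < size (compl d) ->
  nth 0 (compl d) a < nth 0 (compl d) b.
Proof.
move=> hab hb; apply: (sorted_ltn_nth ltn_trans 0 (compl_sorted d)) => //.
by rewrite inE /=; apply: ltn_trans hab hb.
Qed.

Lemma compl_mem d a : a < size (compl d) ->
  [/\ 0 < nth 0 (compl d) a, nth 0 (compl d) a <= size d &
      nth 0 (compl d) a \notin [seq x.+1 | x <- d]].
Proof.
move=> ha; have := mem_nth 0 ha; rewrite mem_filter mem_iota => /and3P[h1 h2 h3].
split => //; lia.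
Qed.

Definition dy (d : seq nat) := sorted leq d /\ forall i, i < size d -> nth 0 d i <= i.

Lemma dyck_dy n d : is_dyck n d -> size d = n /\ dy d.
Proof.
case/andP=> /andP[/eqP hs hsort] /allP hall; split => //; split => // i hi.
by apply: hall; rewrite mem_iota; lia.
Qed.

Lemma dy_mono d i j : dy d -> i <= j -> j < size d -> nth 0 d i <= nth 0 d j.
Proof.
case=> hs _ hij hj; apply: (sorted_leq_nth leq_trans leqnn 0 hs) => //;
  rewrite inE; lia.
Qed.

Lemma dy_Tlt d i j : dy d -> i < j -> j < size d -> ~~ bB d i -> nth 0 d i < nth 0 d j.
Proof.
move=> hd hij hj; rewrite /bB (_ : i.+1 < size d) /=; last lia.
move=> hne; have h1 := dy_mono hd (leqnn i) (ltn_trans hij hj).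
have h2 := dy_mono hd hij hj.
have h3 := dy_mono hd (leqnSn i) (leq_ltn_trans hij hj).
have h4 := dy_mono hd hij hj.
have h5 : nth 0 d i.+1 <= nth 0 d j by apply: dy_mono hd hij hj.
move: hne; rewrite neq_ltn => /orP[h|h]; lia.
Qed.

Lemma run_end d j : dy d -> j < size d ->
  exists t, [/\ j <= t, t < size d, ~~ bB d t & nth 0 d t = nth 0 d j].
Proof.
move=> hd; move eq_k : (size d - j) => k.
elim: k j eq_k => [|k IH] j ek hj; first lia.
case hb: (bB d j).
- move: (hb); rewrite /bB => /andP[hj1 /eqP he].
  have [t [h1 h2 h3 h4]] := IH j.+1 ltac:(lia) hj1.
  by exists t; split => //; [lia | rewrite h4 he].
- by exists j; split => //; rewrite hb.
Qed.

Lemma compl_size d : dy d -> count (bB d) (iota 0 (size d)) <= size (compl d).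
Proof.
move=> hd; set n := size d; set V := [seq x.+1 | x <- d].
have hsz : size (compl d) = n - count (mem V) (iota 1 n).
  rewrite /compl size_filter; have := count_predC (mem V) (iota 1 n).
  rewrite size_iota => h.
  have -> : count (fun k => k \notin V) (iota 1 n) = count (predC (mem V)) (iota 1 n) by [].
  lia.
set W := [seq (nth 0 d i).+1 | i <- filter (predC (bB d)) (iota 0 n)].
have hle : count (mem V) (iota 1 n) <= size W.
  rewrite -size_filter; apply: uniq_leq_size; first by rewrite filter_uniq // iota_uniq.
  move=> x; rewrite mem_filter => /andP[/mapP[y hy ->] _].
  move/nthP: hy => /(_ 0) [j hj <-].
  have [t [h1 h2 h3 h4]] := run_end hd hj.
  apply/mapP; exists t; last by rewrite h4.
  by rewrite mem_filter mem_iota /= h3; lia.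
have hW : size W = n - count (bB d) (iota 0 n).
  rewrite size_map size_filter; have := count_predC (bB d) (iota 0 n).
  rewrite size_iota; lia.
have := count_size (bB d) (iota 0 n); rewrite size_iota; lia.
Qed.

Lemma rk_lt_size d i : dy d -> i < size d -> bB d i -> rk d i < size (compl d).
Proof.
move=> hd hi hb; rewrite rkE //; apply: leq_trans (compl_size hd).
exact: count_iota_lt.
Qed.

Lemma exced d j : dy d -> j < size d -> bB d j -> j.+1 < nth 0 (compl d) (rk d j).
Proof.
move=> hd hj hb; set r := rk d j; set V := [seq x.+1 | x <- d].
have hr : r < size (compl d) by apply: rk_lt_size.
rewrite ltnNge; apply/negP => hle.
set S1 := [seq nth 0 (compl d) a | a <- iota 0 r.+1].
have h1 : size S1 <= count (predC (mem V)) (iota 1 j.+1).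
  rewrite -size_filter; apply: uniq_leq_size.
    rewrite map_inj_in_uniq ?iota_uniq // => a b; rewrite !mem_iota => ha hb' /eqP.
    have ha2 : a < size (compl d) by lia.
    have hb2 : b < size (compl d) by lia.
    by rewrite nth_uniq ?compl_uniq // => /eqP.
  move=> x /mapP[a]; rewrite mem_iota => ha ->.
  have ha' : a < size (compl d) by lia.
  have [m1 m2 m3] := compl_mem ha'.
  rewrite mem_filter mem_iota /= m3 /=.
  have : nth 0 (compl d) a <= nth 0 (compl d) r.
    case: (ltngtP a r) => h; [exact: ltnW (compl_lt h hr) | lia | by rewrite h].
  lia.
set W := rcons [seq (nth 0 d i).+1 | i <- filter (predC (bB d)) (iota 0 j)] (nth 0 d j).+1.
have h2 : size W <= count (mem V) (iota 1 j.+1).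
  rewrite -size_filter; apply: uniq_leq_size.
    rewrite rcons_uniq; apply/andP; split.
      apply/negP => /mapP[i]; rewrite mem_filter mem_iota /= => /andP[hi1 hi2] /eqP.
      rewrite eqSS => /eqP he.
      have := dy_Tlt hd (i := i) (j := j) ltac:(lia) hj hi1; lia.
    rewrite map_inj_in_uniq; first by rewrite filter_uniq // iota_uniq.
    move=> a b; rewrite !mem_filter !mem_iota /= => /andP[ha1 ha2] /andP[hb1 hb2] /eqP.
    rewrite eqSS => /eqP he.
    case: (ltngtP a b) => h //.
    - by have := dy_Tlt hd h (ltn_trans (leq_trans hb2 (leqnn _)) hj) ha1; lia.
    - by have := dy_Tlt hd h (ltn_trans (leq_trans ha2 (leqnn _)) hj) hb1; lia.
  move=> x; rewrite mem_rcons inE => /orP[/eqP ->|].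
    rewrite mem_filter mem_iota /= map_f ?mem_nth //=.
    have := (proj2 hd) j hj; lia.
  case/mapP=> i hi ->; rewrite mem_filter mem_iota /= in hi; case/andP: hi => hi1 hi2.
  rewrite mem_filter mem_iota /= map_f ?mem_nth //=; last lia.
  have := (proj2 hd) i ltac:(lia); lia.
have e1 := count_predC (mem V) (iota 1 j.+1).
have e2 := count_predC (bB d) (iota 0 j).
rewrite size_iota in e1; rewrite size_iota in e2.
have e3 : size W = (count (predC (bB d)) (iota 0 j)).+1
  by rewrite size_rcons size_map size_filter.
have e4 : size S1 = r.+1 by rewrite size_map size_iota.
have e5 : r = count (bB d) (iota 0 j) by rewrite /r rkE.
lia.
Qed.

Lemma psi_T d i : i < size d -> ~~ bB d i -> nth 0 (psi d) i = (nth 0 d i).+1.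
Proof. by move=> hi hb; rewrite psi_nth // (negbTE hb). Qed.

Lemma psi_B d i : i < size d -> bB d i -> nth 0 (psi d) i = nth 0 (compl d) (rk d i).
Proof. by move=> hi hb; rewrite psi_nth // hb. Qed.

Lemma same_class_lt d a b : dy d -> a < b -> b < size d -> bB d a = bB d b ->
  nth 0 (psi d) a < nth 0 (psi d) b.
Proof.
move=> hd hab hb he; have ha : a < size d by lia.
case hba: (bB d a); move: he; rewrite hba => he.
- rewrite psi_B // psi_B //; apply: compl_lt; last exact: rk_lt_size.
  by rewrite !rkE //; apply: count_iota_lt.
- rewrite psi_T ?hba // psi_T -?he //; rewrite ltnS; apply: dy_Tlt => //.
  by rewrite hba.
Qed.

Lemma psi_inV d i : i < size d ->
  (nth 0 (psi d) i \in [seq x.+1 | x <- d]) = ~~ bB d i.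
Proof.
move=> hi; case hb: (bB d i) => /=.
- rewrite psi_B //.
  case: (ltnP (rk d i) (size (compl d))) => h.
    by have [_ _ /negbTE] := compl_mem h.
  rewrite nth_default //.
  by apply/negP => /mapP[x].
- by rewrite psi_T ?hb // map_f // mem_nth.
Qed.

Lemma psi_neq d a b : dy d -> a < b -> b < size d ->
  nth 0 (psi d) a != nth 0 (psi d) b.
Proof.
move=> hd hab hb.
case he: (bB d a == bB d b).
  by have := same_class_lt hd hab hb (eqP he); rewrite neq_ltn => ->.
apply/negP => /eqP e.
have := psi_inV (d := d) (i := a) ltac:(lia); rewrite e psi_inV //.
by move: he; case: (bB d a); case: (bB d b).
Qed.

Lemma psi_range d i : dy d -> i < size d ->
  0 < nth 0 (psi d) i <= size d.
Proof.
move=> hd hi; case hb: (bB d i).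
- rewrite psi_B //; have [h1 h2 _] := compl_mem (rk_lt_size hd hi hb); lia.
- rewrite psi_T ?hb //; have := (proj2 hd) i hi; lia.
Qed.

Lemma psi_uniq d : dy d -> uniq (psi d).
Proof.
move=> hd; apply/(uniqP 0) => a b; rewrite !inE size_psi => ha hb e.
case: (ltngtP a b) => h //.
- by have := psi_neq hd h hb; rewrite e eqxx.
- by have := psi_neq hd h ha; rewrite e eqxx.
Qed.

Lemma psi_perm321 n d : is_dyck n d -> is_perm321 n (psi d).
Proof.
move=> /dyck_dy [hs hd]; split.
  rewrite /is_perm; apply: uniq_perm; [exact: psi_uniq | exact: iota_uniq |].
  apply: (snd (uniq_min_size (psi_uniq hd) (s2 := iota 1 n) _ _)).
  - move=> x /(nthP 0) [i]; rewrite size_psi => hi <-.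
    rewrite mem_iota -hs; exact: psi_range hd hi.
  - by rewrite size_iota size_psi hs.
move=> [i [j [l [hij hjl hl h1 h2]]]].
rewrite size_psi in hl.
case e1: (bB d i == bB d j).
  have := same_class_lt hd hij (ltn_trans hjl hl) (eqP e1); lia.
case e2: (bB d j == bB d l).
  have := same_class_lt hd hjl hl (eqP e2); lia.
have e3 : bB d i = bB d l.
  by move: e1 e2; case: (bB d i); case: (bB d j); case: (bB d l).
have := same_class_lt hd (ltn_trans hij hjl) hl e3; lia.
Qed.

Lemma bB_eq d i : bB d i -> nth 0 d i = nth 0 d i.+1.
Proof. by case/andP=> _ /eqP. Qed.

Lemma bB_lt d i : bB d i -> i.+1 < size d.
Proof. by case/andP. Qed.

Lemma min_att d i : dy d -> i < size d ->
  exists j, [/\ i <= j, j < size d & nth 0 (psi d) j = (nth 0 d i).+1].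
Proof.
move=> hd; move eq_k : (size d - i) => k.
elim: k i eq_k => [|k IH] i ek hi; first lia.
case hb: (bB d i).
- have [j [h1 h2 h3]] := IH i.+1 ltac:(lia) (bB_lt hb).
  by exists j; split => //; [lia | rewrite h3 (bB_eq hb)].
- by exists i; split => //; rewrite psi_T ?hb.
Qed.

Lemma min_le d i j : dy d -> i <= j -> j < size d ->
  (nth 0 d i).+1 <= nth 0 (psi d) j.
Proof.
move=> hd hij hj; case hb: (bB d j).
- rewrite psi_B //; have := exced hd hj hb; have := (proj2 hd) i ltac:(lia); lia.
- by rewrite psi_T ?hb // ltnS; apply: dy_mono.
Qed.

Lemma psi_inj n d1 d2 : is_dyck n d1 -> is_dyck n d2 -> psi d1 = psi d2 -> d1 = d2.
Proof.
move=> /dyck_dy [hs1 hd1] /dyck_dy [hs2 hd2] he.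
apply: (eq_from_nth (x0 := 0)); first by rewrite hs1 hs2.
move=> i hi.
have hi2 : i < size d2 by lia.
have [j1 [a1 b1 c1]] := min_att hd1 hi.
have [j2 [a2 b2 c2]] := min_att hd2 hi2.
have e1 := min_le hd2 a1 ltac:(lia).
have e2 := min_le hd1 a2 ltac:(lia).
rewrite -he c1 in e1; rewrite he c2 in e2.
lia.
Qed.

Lemma hill_fix d : dy d -> hill d = fixp (psi d).
Proof.
move=> hd; rewrite /hill /fixp size_psi; apply: eq_in_count => i.
rewrite mem_iota => /andP[_ hi]; rewrite add0n in hi.
case hb: (bB d i).
- rewrite psi_B //; have := exced hd hi hb.
  move: (bB_lt hb) (bB_eq hb) => h1 ->.
  rewrite ltnn orbF (_ : (i.+1 == size d) = false); last by apply/eqP; lia.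
  rewrite andbF => h; apply/esym/eqP; lia.
- rewrite psi_T ?hb // eqSS.
  have [h|h] : i.+1 < size d \/ i.+1 = size d by lia.
  + rewrite (_ : nth 0 d i < nth 0 d i.+1) ?orbT ?andbT //.
    apply: dy_Tlt => //; by rewrite hb.
  + by rewrite h eqxx andbT.
Qed.

Lemma des_i d i : dy d -> i.+1 < size d ->
  (nth 0 (psi d) i.+1 < nth 0 (psi d) i) = bB d i && ~~ bB d i.+1.
Proof.
move=> hd hi; have hi' : i < size d by lia.
case h1: (bB d i); case h2: (bB d i.+1) => /=.
- by have := same_class_lt hd (ltnSn i) hi (etrans h1 (esym h2)); lia.
- rewrite (psi_B (i := i)) // (psi_T (i := i.+1)) ?h2 // -(bB_eq h1).
  have := exced hd hi' h1; have := (proj2 hd) i hi'; lia.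
- rewrite (psi_T (i := i)) ?h1 // (psi_B (i := i.+1)) //.
  have := exced hd hi h2; have := (proj2 hd) i hi'; lia.
- by have := same_class_lt hd (ltnSn i) hi (etrans h1 (esym h2)); lia.
Qed.

Lemma seg_des d : dy d -> seg d = des (psi d).
Proof.
move=> hd; rewrite /seg /des size_psi.
transitivity (count (fun i => bB d i && ((i == 0) || ~~ bB d i.-1)) (iota 0 (size d).-1)).
  apply: eq_in_count => i; rewrite mem_iota => /andP[_ hi]; rewrite add0n in hi.
  rewrite /bB (_ : i.+1 < size d) /=; last lia.
  case: i hi => [|i] hi //=.
  by rewrite (_ : i.+1 < size d) /=; last lia.
rewrite starts_ends; last by rewrite /bB; apply/negbTE; rewrite negb_and; apply/orP; left; lia.
apply: eq_in_count => i; rewrite mem_iota => /andP[_ hi]; rewrite add0n in hi.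
by rewrite /= des_i //; lia.
Qed.

Lemma notbB d j : j < size d ->
  ~~ bB d j = (j.+1 == size d) || (nth 0 d j != nth 0 d j.+1).
Proof.
move=> hj; rewrite /bB negb_and.
have [h|h] : j.+1 < size d \/ j.+1 = size d by lia.
- by rewrite h (_ : (j.+1 == size d) = false) //; apply/eqP; lia.
- by rewrite h ltnn eqxx.
Qed.

Lemma lseg_ldes d : dy d -> lseg d = (ldes (psi d)).+1.
Proof.
move=> hd; rewrite /lseg /ldes size_psi.
set n := size d.
have ea : find (fun i => nth 0 d i == nth 0 d i.+1) (iota 0 n.-1) = find (bB d) (iota 0 n.-1).
  apply: eq_in_find => i; rewrite mem_iota => /andP[_ hi]; rewrite add0n in hi.
  by rewrite /bB (_ : i.+1 < size d) //; lia.
have eR : find (fun i => (i.+1 == n) || (nth 0 (psi d) i.+1 < nth 0 (psi d) i)) (iota 0 n)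
   = find (fun i => (i.+1 == n) || (bB d i && ~~ bB d i.+1)) (iota 0 n).
  apply: eq_in_find => i; rewrite mem_iota => /andP[_ hi]; rewrite add0n in hi.
  have [h|h] : i.+1 < n \/ i.+1 = n by lia.
  - by rewrite /= des_i.
  - by rewrite /= h eqxx.
rewrite ea eR.
have [fa1 fa2 fa3] := find_iota_spec (bB d) n.-1.
move: fa1 fa2 fa3; set a := find (bB d) (iota 0 n.-1) => fa1 fa2 fa3.
case: eqP => ha.
  case hn: (n == 0); first by move/eqP: hn => ->.
  move/negbT: hn => hn.
  have hf : find (fun i => (i.+1 == n) || (bB d i && ~~ bB d i.+1)) (iota 0 n) = n.-1.
    apply: find_iota_char; first lia.
    - move=> i hi /=; rewrite (_ : (i.+1 == n) = false); last by apply/eqP; lia.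
      by rewrite (negbTE (fa2 i ltac:(lia))).
    - by move=> h /=; rewrite (_ : n.-1.+1 = n) ?eqxx //; lia.
  rewrite hf; lia.
have han : a < n.-1 by lia.
have hba : bB d a by apply: fa3.
rewrite (_ : (n == 0) = false); last by apply/eqP; lia.
set Q := (fun j => (a <= j) && ((j.+1 == n) || (nth 0 d j != nth 0 d j.+1))).
have [fe1 fe2 fe3] := find_iota_spec Q n.
move: fe1 fe2 fe3; set e := find Q (iota 0 n) => fe1 fe2 fe3.
have hQ : forall j, j < n -> Q j = (a <= j) && ~~ bB d j.
  by move=> j hj; rewrite /Q notbB.
have hen : e < n.
  case: (ltngtP e n) => h //; try lia.
  have := fe2 n.-1 ltac:(lia); rewrite hQ; last lia.
  rewrite /bB (_ : n.-1.+1 < size d = false) ?andbF; last by apply/negbTE; rewrite -leqNgt; lia.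
  by rewrite andbT; move/negP; case; lia.
have hQe := fe3 hen; rewrite hQ // in hQe; case/andP: hQe => hae hbe.
have hae' : a < e.
  rewrite ltn_neqAle hae andbT; apply/eqP => h; move: hbe; by rewrite -h hba.
have hmid : forall j, a <= j -> j < e -> bB d j.
  move=> j h1 h2; have := fe2 j h2; rewrite hQ; last lia.
  by rewrite h1 /= negbK.
suff hf : find (fun i => (i.+1 == n) || (bB d i && ~~ bB d i.+1)) (iota 0 n) = e.-1.
  rewrite hf; lia.
apply: find_iota_char; first lia.
- move=> i hi /=; rewrite (_ : (i.+1 == n) = false); last by apply/eqP; lia.
  case: (ltnP i a) => h.
    by rewrite (negbTE (fa2 i h)).
  rewrite (hmid i.+1) ?andbF //; lia.
- move=> _ /=; rewrite (_ : e.-1.+1 = e); last lia.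
  rewrite (hmid e.-1) ?hbe ?orbT //; lia.
Qed.

Fixpoint rm (s : seq nat) : nat :=
  if s is x :: s' then (if s' is [::] then x else minn x (rm s')) else 0.

Lemma rm_mem s : s != [::] -> rm s \in s.
Proof.
elim: s => [|x s IH] //= _.
case: s IH => [|y s] IH; first by rewrite inE eqxx.
have := IH isT; rewrite /minn; case: ifP => _ h; rewrite inE.
- by rewrite eqxx.
- by rewrite h orbT.
Qed.

Lemma rm_le s x : x \in s -> rm s <= x.
Proof.
elim: s => [|y s IH] //=.
case: s IH => [|z s] IH; first by rewrite inE => /eqP ->.
rewrite inE => /orP[/eqP ->|h]; first exact: geq_minl.
by apply: leq_trans (geq_minr _ _) (IH h).
Qed.

Definition mm (p : seq nat) i := rm (drop i p).

Lemma mm_rec p i : i.+1 < size p -> mm p i = minn (nth 0 p i) (mm p i.+1).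
Proof.
move=> h; rewrite /mm (drop_nth 0) /=; last lia.
by case e: (drop i.+1 p) => //; have := size_drop i.+1 p; rewrite e /=; lia.
Qed.

Lemma mm_last p i : i.+1 = size p -> mm p i = nth 0 p i.
Proof.
move=> h; rewrite /mm (drop_nth 0) /=; last lia.
by rewrite drop_oversize //; lia.
Qed.

Lemma mm_le p i j : i <= j -> j < size p -> mm p i <= nth 0 p j.
Proof.
move=> hij hj; apply: rm_le.
have -> : nth 0 p j = nth 0 (drop i p) (j - i) by rewrite nth_drop subnKC.
have h : j - i < size p - i by lia.
by apply: mem_nth; rewrite size_drop; exact: h.
Qed.

Lemma mm_att p i : i < size p -> exists k, [/\ i <= k, k < size p & nth 0 p k = mm p i].
Proof.
move=> hi; have : drop i p != [::].
  by apply/eqP => e; have := size_drop i p; rewrite e /=; lia.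
move/rm_mem/(nthP 0) => [k hk e].
rewrite size_drop in hk.
have hk' : k < size p - i by exact: hk.
have e' : nth 0 (drop i p) k = rm (drop i p) by exact: e.
exists (i + k); split; try lia.
by rewrite /mm -e' nth_drop.
Qed.

Lemma pm_size n p : perm_eq p (iota 1 n) -> size p = n.
Proof. by move/perm_size; rewrite size_iota. Qed.

Lemma pm_range n p j : perm_eq p (iota 1 n) -> j < size p -> 0 < nth 0 p j <= n.
Proof.
move=> hp hj; have := mem_nth 0 hj; rewrite (perm_mem hp) mem_iota => h.
have h' : 0 < nth 0 p j < 1 + n by exact: h.
lia.
Qed.

Lemma pm_inj n p a b : perm_eq p (iota 1 n) -> a < size p -> b < size p ->
  nth 0 p a = nth 0 p b -> a = b.
Proof.
move=> hp ha hb e; have hu : uniq p by rewrite (perm_uniq hp) iota_uniq.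
by apply/eqP; rewrite -(nth_uniq 0 ha hb hu); apply/eqP.
Qed.

Lemma mm_pos n p i : perm_eq p (iota 1 n) -> i < size p -> 0 < mm p i.
Proof.
move=> hp hi; have [k [h1 h2 <-]] := mm_att hi.
by have := pm_range hp h2; lia.
Qed.

Lemma mm_mono p i j : i <= j -> j < size p -> mm p i <= mm p j.
Proof.
move=> hij hj; have [k [h1 h2 <-]] := mm_att hj.
apply: mm_le => //; lia.
Qed.

Lemma mm_ne_next n p i : perm_eq p (iota 1 n) -> i.+1 < size p ->
  nth 0 p i != mm p i.+1.
Proof.
move=> hp hi; have [k [h1 h2 <-]] := mm_att hi.
apply/eqP => e; have := pm_inj hp (ltn_trans (ltnSn i) hi) h2 e; lia.
Qed.

Lemma T_val n p i : perm_eq p (iota 1 n) -> i < size p ->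
  (i.+1 = size p \/ mm p i != mm p i.+1) -> nth 0 p i = mm p i.
Proof.
move=> hp hi [h|h]; first by rewrite mm_last.
have [hi1|hi1] : i.+1 < size p \/ i.+1 = size p by lia.
  2: by rewrite mm_last.
move: h; rewrite (mm_rec hi1) /minn.
case: ifP => // _; by rewrite eqxx.
Qed.

Lemma B_val n p i : perm_eq p (iota 1 n) -> i.+1 < size p ->
  mm p i = mm p i.+1 -> mm p i.+1 < nth 0 p i.
Proof.
move=> hp hi e; have := mm_ne_next hp hi.
move: e; rewrite (mm_rec hi) /minn; case: ifP => h e; lia.
Qed.

Lemma mm_small n p i : perm_eq p (iota 1 n) -> i < size p -> mm p i <= i.+1.
Proof.
move=> hp hi; rewrite leqNgt; apply/negP => hlt.
have hu : uniq (drop i p) by apply: drop_uniq; rewrite (perm_uniq hp) iota_uniq.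
have hsub : {subset drop i p <= iota i.+2 (n - i.+1)}.
  move=> x hx; rewrite mem_iota.
  have h1 := rm_le hx.
  have := mem_drop hx; rewrite (perm_mem hp) mem_iota => h2.
  have h3 : mm p i <= x by exact: h1.
  have h4 : 1 <= x < 1 + n by exact: h2.
  have h5 := pm_size hp.
  lia.
have := uniq_leq_size hu hsub.
rewrite size_drop size_iota (pm_size hp).
have := pm_size hp; lia.
Qed.

Definition phi (p : seq nat) : seq nat := mkseq (fun i => (mm p i).-1) (size p).

Lemma size_phi p : size (phi p) = size p.
Proof. by rewrite size_mkseq. Qed.

Lemma phi_nth p i : i < size p -> nth 0 (phi p) i = (mm p i).-1.
Proof. by move=> hi; rewrite nth_mkseq. Qed.

Lemma phi_bB n p i : perm_eq p (iota 1 n) -> i < size p ->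
  bB (phi p) i = (i.+1 < size p) && (mm p i == mm p i.+1).
Proof.
move=> hp hi; rewrite /bB size_phi; case h: (i.+1 < size p) => //=.
rewrite !phi_nth //; have := mm_pos hp hi; have := mm_pos hp h.
by move=> h1 h2; apply/eqP/eqP => e; lia.
Qed.

Lemma phi_dyck n p : perm_eq p (iota 1 n) -> is_dyck n (phi p).
Proof.
move=> hp; rewrite /is_dyck size_phi (pm_size hp) eqxx /=; apply/andP; split.
  apply/(sortedP 0) => i; rewrite size_phi => hi; rewrite !phi_nth //; last lia.
  have := mm_mono (p := p) (leqnSn i) hi; lia.
apply/allP => i; rewrite mem_iota => /andP[_ hi]; rewrite add0n -(pm_size hp) in hi.
rewrite phi_nth //; have := mm_small hp hi; lia.
Qed.

Lemma Bvals_incr n p l l' : perm_eq p (iota 1 n) -> avoids321 p -> l < l' ->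
  l'.+1 < size p -> mm p l' = mm p l'.+1 -> nth 0 p l < nth 0 p l'.
Proof.
move=> hp hav hll hl' e.
have hb := B_val hp hl' e.
have [k [h1 h2 h3]] := mm_att hl'.
rewrite ltnNge leq_eqVlt; apply/negP => /orP[/eqP he|hlt].
  by have := pm_inj hp (ltn_trans hll (ltn_trans (ltnSn _) hl')) (ltn_trans (ltnSn _) hl') (esym he); lia.
apply: hav; exists l, l', k; split; [lia|lia|lia|exact: hlt|by rewrite h3].
Qed.

Lemma mem_iota0 (j n : nat) : (j \in iota 0 n) = (j < n).
Proof. by rewrite mem_iota. Qed.

Lemma nB_case m i (b : bool) : i < m -> (i.+1 < m) && b = false -> i.+1 = m \/ ~~ b.
Proof. move=> hi; case: b; rewrite ?andbT ?andbF => h; [left; lia | by right]. Qed.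

Lemma compl_phi n p : perm_eq p (iota 1 n) -> avoids321 p ->
  compl (phi p) = [seq nth 0 p l | l <- filter (bB (phi p)) (iota 0 (size p))].
Proof.
move=> hp hav.
have inV : forall x, (x \in [seq y.+1 | y <- phi p]) = has (fun j => mm p j == x) (iota 0 (size p)).
  move=> x; apply/mapP/hasP.
  - case=> y /(nthP 0) [j]; rewrite size_phi => hj <- ->.
    by exists j; rewrite ?mem_iota0 // phi_nth // prednK //; apply: (mm_pos hp).
  - case=> j; rewrite mem_iota => /andP[_ hj] /eqP <-; rewrite add0n in hj.
    exists (nth 0 (phi p) j); first by apply: mem_nth; rewrite size_phi.
    by rewrite phi_nth // prednK //; apply: (mm_pos hp).
apply: (irr_sorted_eq ltn_trans ltnn (compl_sorted _)).
  rewrite sorted_pairwise; last exact: ltn_trans.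
  apply: pw_map_incr.
    rewrite -sorted_pairwise; last exact: ltn_trans.
    exact: sorted_filter ltn_trans _ _ (iota_ltn_sorted 0 _).
  move=> a b; rewrite !mem_filter !mem_iota => /andP[ha1 /andP[_ ha2]] /andP[hb1 /andP[_ hb2]] hab.
  rewrite add0n in hb2; rewrite (phi_bB hp hb2) in hb1.
  case/andP: hb1 => hb3 /eqP hb4.
  exact: Bvals_incr hp hav hab hb3 hb4.
move=> x; rewrite /compl mem_filter inV size_phi; apply/andP/mapP.
- case=> hx1 hx2.
  have : x \in p by rewrite (perm_mem hp) -(pm_size hp).
  case/(nthP 0) => l hl hxl.
  exists l; last by rewrite hxl.
  rewrite mem_filter mem_iota0 hl andbT (phi_bB hp hl).
  case h: ((l.+1 < size p) && (mm p l == mm p l.+1)) => //.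
  move/negP: hx1; case; apply/hasP; exists l; first by rewrite mem_iota0.
  rewrite -hxl (T_val hp hl) //.
  by case: (nB_case hl h) => [->|]; [left|right].
- case=> l; rewrite mem_filter mem_iota => /andP[hb /andP[_ hl]] ->.
  rewrite add0n in hl; split.
    apply/hasP => [[j]]; rewrite mem_iota => /andP[_ hj] /eqP e; rewrite add0n in hj.
    have [k [h1 h2 h3]] := mm_att hj.
    have ekl : k = l by apply: (pm_inj hp h2 hl); rewrite h3 e.
    subst k.
    have hmono := mm_mono h1 hl.
    have hle := mm_le (leqnn l) hl.
    rewrite (phi_bB hp hl) in hb; case/andP: hb => hb1 /eqP hb2.
    have := B_val hp hb1 hb2; lia.
  have /andP[r1 r2] := pm_range hp hl.
  rewrite mem_iota; apply/andP; split; first exact: r1.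
  rewrite add1n ltnS (pm_size hp); exact: r2.
Qed.

Lemma psi_phi n p : perm_eq p (iota 1 n) -> avoids321 p -> psi (phi p) = p.
Proof.
move=> hp hav; apply: (eq_from_nth (x0 := 0)); first by rewrite size_psi size_phi.
move=> i; rewrite size_psi size_phi => hi.
rewrite psi_nth ?size_phi //.
case hb: (bB (phi p) i).
- rewrite (compl_phi hp hav) rkE ?size_phi //.
  by rewrite nth_filter_iota.
- rewrite phi_nth // prednK; last exact: (mm_pos hp).
  symmetry; apply: (T_val hp hi).
  move: hb; rewrite (phi_bB hp hi) => hb.
  by case: (nB_case hi hb) => [->|]; [left|right].
Qed.

Theorem lemma4p4 (n : nat) :
  (forall D, is_dyck n D -> is_perm321 n (psi D)) /\
  (forall D1 D2, is_dyck n D1 -> is_dyck n D2 -> psi D1 = psi D2 -> D1 = D2) /\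
  (forall p, is_perm321 n p -> exists D, is_dyck n D /\ psi D = p) /\
  (forall D, is_dyck n D ->
     (hill D, seg D, lseg D) = (fixp (psi D), des (psi D), (ldes (psi D)).+1)).
Proof.
split; first exact: psi_perm321.
split; first exact: psi_inj.
split.
- move=> p [hp hav]; exists (phi p); split; [exact: phi_dyck hp | exact: psi_phi hp hav].
- move=> D /dyck_dy [_ hd].
  by rewrite hill_fix // seg_des // lseg_ldes.
Qed.
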